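(* Let $x_s<x_t$ be integers, let $C\ge 0$, and let $f:[x_s,x_t]\to\mathbb{R}$ be such that $([x_s,x_t],f)$ is an Ameso($C$) pair. If there exist $x'\in[x_s,x_t]$ and $z\in[x_s,x')$ with $f(z)-f(x')\ge C$, then $\min_{y\in[z,x_t]}f(y)=\min_{y\in[x_s,x_t]}f(y)$.
   Context: For integers $a\le b$, $[a,b]$ denotes the set of integers $\{a,\dots,b\}$ and $[a,b)$ the set $\{a,\dots,b-1\}$. Floors and ceilings of vectors are taken componentwise. A set $D^n\subseteq\mathbb{Z}^n$ is an Ameso set if $\lceil(\vec x+\vec y)/2\rceil,\lfloor(\vec x+\vec y)/2\rfloor\in D^n$ for all $\vec x,\vec y\in D^n$. For $C\ge 0$, $(D^n,f)$ is an Ameso($C$) pair if $D^n$ is an Ameso set, $f:D^n\to\mathbb{R}$ is bounded below, and $f(\vec x)+f(\vec y)+C\ge f(\lceil(\vec x+\vec y)/2\rceil)+f(\lfloor(\vec x+\vec y)/2\rfloor)$ for all $\vec x,\vec y\in D^n$. *)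

(* Defs.v *)
From Stdlib Require Import ZArith Reals.
Open Scope R_scope.

(* Componentwise floor / ceiling of (x+y)/2 in dimension n = 1.
   Z.div rounds toward -infinity, so [floor_half a = floor(a/2)] and
   [ceil_half a = -floor(-a/2) = ceil(a/2)]. *)
Definition floor_half (a : Z) : Z := Z.div a 2.
Definition ceil_half (a : Z) : Z := Z.opp (Z.div (Z.opp a) 2).

Definition Ameso_set (D : Z -> Prop) : Prop :=
  forall x y : Z, D x -> D y ->
    D (ceil_half (x + y)) /\ D (floor_half (x + y)).

(* Ameso(C) pair (D, f) with f : D -> R (values of f outside D are irrelevant). *)
Definition Ameso_pair (C : R) (D : Z -> Prop) (f : Z -> R) : Prop :=
  Ameso_set D /\
  (exists b : R, forall x : Z, D x -> b <= f x) /\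
  (forall x y : Z, D x -> D y ->
     f x + f y + C >= f (ceil_half (x + y)) + f (floor_half (x + y))).

Definition Zicc (a b : Z) : Z -> Prop := fun x => (a <= x <= b)%Z.

Definition is_min_on (S : Z -> Prop) (f : Z -> R) (m : R) : Prop :=
  (exists y : Z, S y /\ f y = m) /\ (forall y : Z, S y -> m <= f y).

(* Main.v *)
Require Import Defs.
From Stdlib Require Import ZArith Reals Lia Lra.
Open Scope R_scope.

Lemma mid2 (y w z : Z) : (y + w = 2*z)%Z ->
  ceil_half (y+w) = z /\ floor_half (y+w) = z.
Proof.
  intros H; rewrite H; unfold ceil_half, floor_half; split.
  - replace (- (2*z))%Z with ((-z)*2)%Z by ring; rewrite Z.div_mul by lia; ring.
  - replace (2*z)%Z with (z*2)%Z by ring; apply Z.div_mul; lia.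
Qed.

Lemma argmax (f : Z -> R) (a : Z) (n : nat) : exists k,
  (a <= k <= a + Z.of_nat n)%Z /\
  forall q, (a <= q <= a + Z.of_nat n)%Z -> f q <= f k /\ ((q < k)%Z -> f q < f k).
Proof.
  induction n as [|n [k [Hk Hq]]].
  - exists a; split; [lia|]. intros q Hq'. assert (q = a) by lia; subst.
    split; [lra| intros; lia].
  - rewrite Nat2Z.inj_succ.
    destruct (Rlt_le_dec (f k) (f (a + Z.of_nat n + 1)%Z)) as [Hl|Hl].
    + exists (a + Z.of_nat n + 1)%Z; split; [lia|]. intros q Hq'.
      destruct (Z.eq_dec q (a + Z.of_nat n + 1)%Z) as [->|Hne]; [split; [lra|intros; lia]|].
      destruct (Hq q ltac:(lia)) as [H1 _]. split; intros; lra.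
    + exists k; split; [lia|]. intros q Hq'.
      destruct (Z.eq_dec q (a + Z.of_nat n + 1)%Z) as [->|Hne]; [split; [lra|intros; lia]|].
      apply Hq; lia.
Qed.

Lemma key xs xt C f y z x' : 0 <= C -> Ameso_pair C (Zicc xs xt) f ->
  (xs <= y)%Z -> (y < z < x')%Z -> (x' <= xt)%Z -> f z >= f x' + C -> f y >= f x'.
Proof.
  intros HC [_ [_ Hp]] H1 H2 H3 H4.
  destruct (argmax f (y+1) (Z.to_nat (x' - 1 - (y+1)))) as [k [Hk Hq]].
  rewrite Z2Nat.id in Hk, Hq by lia.
  assert (Hzk : f z <= f k) by (apply Hq; lia).
  destruct (Z_le_gt_dec (2*k - y) x') as [Hn|Hf].
  - pose proof (mid2 y (2*k-y) k ltac:(lia)) as [E1 E2].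
    assert (Hin : Zicc xs xt (2*k-y)%Z) by (unfold Zicc; lia).
    pose proof (Hp y (2*k-y)%Z ltac:(unfold Zicc; lia) Hin) as P.
    rewrite E1, E2 in P.
    destruct (Z.eq_dec (2*k-y) x') as [Ew|Ew].
    + rewrite Ew in P. lra.
    + assert (f (2*k-y)%Z <= f k) by (apply Hq; lia). lra.
  - pose proof (mid2 (2*k-x') x' k ltac:(lia)) as [E1 E2].
    pose proof (Hp (2*k-x')%Z x' ltac:(unfold Zicc; lia) ltac:(unfold Zicc; lia)) as P.
    rewrite E1, E2 in P.
    assert (f (2*k-x')%Z < f k) by (apply Hq; lia). lra.
Qed.

Theorem corollary3 (xs xt : Z) (C : R) (f : Z -> R) (x' z : Z) (m1 m2 : R) :
  (xs < xt)%Z ->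
  0 <= C ->
  Ameso_pair C (Zicc xs xt) f ->
  (xs <= x' <= xt)%Z ->
  (xs <= z < x')%Z ->
  f z - f x' >= C ->
  is_min_on (Zicc z xt) f m1 ->
  is_min_on (Zicc xs xt) f m2 ->
  m1 = m2.
Proof.
  intros Hx HC HA Hx' Hz Hd [[y1 [Hy1 E1]] M1] [[y2 [Hy2 E2]] M2].
  unfold Zicc in *.
  assert (m2 <= m1) by (subst m1; apply M2; lia).
  assert (m1 <= m2).
  { destruct (Z_le_gt_dec z y2).
    - subst m2; apply M1; lia.
    - assert (m1 <= f x') by (apply M1; lia).
      assert (f y2 >= f x') by (apply (key xs xt C f y2 z x'); auto; lia || lra).
      lra. }
  lra.
Qed.
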